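(* In the linear model setting described in the context, for any $\tau\in[0,1]$, $$\mathcal U(\hat f_\tau)=\tau\sum_{s=1}^Kw_s\Big(\hat b_s-\sum_{s'=1}^Kw_{s'}\hat b_{s'}\Big)^2\quad\text{almost surely.}$$
   Context: Model: $Y=\langle\boldsymbol X,\boldsymbol\beta^*\rangle+b^*_S+\xi$, $\boldsymbol X\sim\mathcal N(\boldsymbol0,\boldsymbol\Sigma)$ with $\boldsymbol\Sigma\succ0$, independent of $S\in[K]$, $\xi\sim\mathcal N(0,\sigma^2)$ independent. Observations: for each $s$, $\boldsymbol Y_s=\mathbf X_s\boldsymbol\beta^*+b^*_s\boldsymbol1_{n_s}+\boldsymbol\xi_s$ ($\mathbf X_s\in\mathbb R^{n_s\times p}$ with i.i.d. $\mathcal N(\boldsymbol0,\boldsymbol\Sigma)$ rows, $\boldsymbol\xi_s$ with i.i.d. $\mathcal N(0,\sigma^2)$ entries, all independent); $n=\sum_sn_s$, $w_s=n_s/n$. $(\hat{\boldsymbol\beta},\hat{\boldsymbol b})\in\arg\min_{(\boldsymbol\beta,\boldsymbol b)}\sum_sw_s\frac1{n_s}\|\boldsymbol Y_s-\mathbf X_s\boldsymbol\beta-b_s\boldsymbol1_{n_s}\|_2^2$ and $\hat f_\tau(\boldsymbol x,s)=\langle\boldsymbol x,\hat{\boldsymbol\beta}\rangle+\sqrt\tau\hat b_s+(1-\sqrt\tau)\sum_{s'}w_{s'}\hat b_{s'}$. Unfairness (with the sample fixed): $\mathcal U(f)=\min_{\nu\in\mathcal P_2(\mathbb R)}\sum_sw_s\mathsf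 W_2^2(\mathrm{Law}(f(\boldsymbol X,s)),\nu)$, $\boldsymbol X\sim\mathcal N(\boldsymbol0,\boldsymbol\Sigma)$, $\mathsf W_2$ the Wasserstein-2 distance. *)

(* Defs.v *)
From HB Require Import structures.
From mathcomp Require Import all_boot all_order all_algebra.
From mathcomp Require Import all_classical all_reals all_analysis.

Set Implicit Arguments.
Unset Strict Implicit.
Unset Printing Implicit Defensive.

Import Order.TTheory GRing.Theory Num.Theory.
Import numFieldNormedType.Exports.
Local Open Scope classical_set_scope.
Local Open Scope ring_scope.

Section Defs.
Variable R : realType.

Definition inner (p : nat) (x y : 'rV[R]_p) : R := \sum_(i < p) x 0 i * y 0 i.

Definition quadf (p : nat) (Sigma : 'M[R]_p) (v : 'rV[R]_p) : R :=
  (v *m Sigma *m v^T) 0 0.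

Definition posdef (p : nat) (Sigma : 'M[R]_p) : Prop :=
  Sigma^T = Sigma /\ forall v : 'rV[R]_p, v != 0 -> 0 < quadf Sigma v.

(* X ~ N(0, Sigma) (Cramer-Wold definition: every linear functional <X, v>
   is measurable and, for v <> 0, has law N(0, v Sigma v^T)). *)
Definition is_gaussian_vector d (Omega : measurableType d)
    (P : probability Omega R) (p : nat) (Sigma : 'M[R]_p)
    (X : Omega -> 'rV[R]_p) : Prop :=
  forall v : 'rV[R]_p,
    measurable_fun setT (fun w => inner (X w) v) /\
    (v != 0 -> pushforward P (fun w => inner (X w) v) =
               normal_prob 0 (Num.sqrt (quadf Sigma v))).

Definition law d (Omega : measurableType d) (P : probability Omega R)
    (F : Omega -> R) : set R -> \bar R := pushforward P F.

Definition coupling (mu nu : set R -> \bar R) (pi : probability (R * R)%type R)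
  : Prop :=
  forall A : set R, measurable A ->
    pi (fst @^-1` A) = mu A /\ pi (snd @^-1` A) = nu A.

Definition W2sq (mu nu : set R -> \bar R) : \bar R :=
  ereal_inf [set c | exists2 pi : probability (R * R)%type R,
      coupling mu nu pi &
      c = (\int[pi]_z (((z.1 - z.2) ^+ 2)%:E))%E].

Definition P2 : set (probability R R) :=
  [set nu : probability R R | (\int[nu]_x ((x ^+ 2)%:E) < +oo)%E].

Definition unf_obj (K : nat) (w : 'I_K -> R) (mu : 'I_K -> set R -> \bar R)
    (nu : probability R R) : \bar R :=
  (\sum_(s < K) (w s)%:E * W2sq (mu s) nu)%E.

(* U(f) = min_{nu in P_2} sum_s w_s W2^2(Law(f(X,s)), nu), given the laws
   mu s = Law(f(X,s)); defined as the infimum (attainment is stated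
   separately in the theorem). *)
Definition unfairness (K : nat) (w : 'I_K -> R) (mu : 'I_K -> set R -> \bar R)
  : \bar R :=
  ereal_inf [set c | exists2 nu, P2 nu & c = unf_obj w mu nu].

Definition weights (K : nat) (n : 'I_K -> nat) (s : 'I_K) : R :=
  (n s)%:R / (\sum_(t < K) n t)%:R.

Definition emp_risk (K p : nat) (n : 'I_K -> nat)
    (Xs : forall s : 'I_K, 'M[R]_(n s, p)) (Ys : forall s : 'I_K, 'cV[R]_(n s))
    (beta : 'rV[R]_p) (b : 'I_K -> R) : R :=
  \sum_(s < K) weights n s / (n s)%:R *
    \sum_(i < n s) (Ys s i 0 - inner (row i (Xs s)) beta - b s) ^+ 2.

Definition is_erm (K p : nat) (n : 'I_K -> nat)
    (Xs : forall s : 'I_K, 'M[R]_(n s, p)) (Ys : forall s : 'I_K, 'cV[R]_(n s))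
    (beta : 'rV[R]_p) (b : 'I_K -> R) : Prop :=
  forall (beta' : 'rV[R]_p) (b' : 'I_K -> R),
    emp_risk Xs Ys beta b <= emp_risk Xs Ys beta' b'.

Definition wmean (K : nat) (w : 'I_K -> R) (b : 'I_K -> R) : R :=
  \sum_(s < K) w s * b s.

Definition fhat (K p : nat) (w : 'I_K -> R) (beta : 'rV[R]_p) (b : 'I_K -> R)
    (tau : R) (x : 'rV[R]_p) (s : 'I_K) : R :=
  inner x beta + Num.sqrt tau * b s + (1 - Num.sqrt tau) * wmean w b.

End Defs.

(* Main.v *)
Require Import Defs.
From HB Require Import structures.
From mathcomp Require Import all_boot all_order all_algebra.
From mathcomp Require Import all_classical all_reals all_analysis.
From mathcomp Require Import measurable_realfun normal_distribution.
From mathcomp Require Import ring lra.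
Import Order.TTheory GRing.Theory Num.Theory.
Local Open Scope classical_set_scope.
Local Open Scope ring_scope.
Section density.
Context d (T : measurableType d) (R : realType).
Local Open Scope ereal_scope.
Import HBNNSimple.
Variables (mu nu : {measure set T -> \bar R}) (g : T -> \bar R).
Hypotheses (g0 : forall x, 0 <= g x) (gfin : forall x, g x \is a fin_num)
  (mg : measurable_fun setT g)
  (nuE : forall A, measurable A -> nu A = \int[mu]_(x in A) g x).

Lemma density_integral f E : (forall x, 0 <= f x) ->
    measurable E -> measurable_fun E f ->
  \int[mu]_(x in E) (f x * g x) = \int[nu]_(x in E) f x.
Proof.
move=> f0 mE mf.
pose h := nnsfun_approx mE mf.
have -> : \int[nu]_(x in E) f x =
    lim (\int[nu]_(x in E) (EFin \o h n) x @[n --> \oo]).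
  have fE x : E x -> f x = lim ((EFin \o h n) x @[n --> \oo]).
    by move=> Ex; apply/esym/cvg_lim => //; exact: cvg_nnsfun_approx.
  under eq_integral => x /[!inE] /fE -> //.
  apply: monotone_convergence => //.
  - move=> n; apply/measurable_EFinP.
    by apply: (measurable_funS measurableT) => //; exact/measurable_funP.
  - by move=> n x Ex //=; rewrite lee_fin.
  - by move=> x Ex a b ab; rewrite lee_fin; exact/lefP/nd_nnsfun_approx.
have -> : \int[mu]_(x in E) (f \* g) x =
    lim (\int[mu]_(x in E) ((EFin \o h n) \* g) x @[n --> \oo]).
  have fg x : E x -> f x * g x = lim (((EFin \o h n) \* g) x @[n --> \oo]).
    by move=> Ex; apply/esym/cvg_lim => //; apply: cvgeZr;
      [exact: gfin|exact: cvg_nnsfun_approx].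
  under eq_integral => x /[!inE] /fg -> //.
  apply: monotone_convergence => [//| | |].
  - move=> n; apply/emeasurable_funM; apply/measurable_funTS.
      exact/measurable_EFinP.
    exact: mg.
  - by move=> n x Ex /=; rewrite mule_ge0 ?lee_fin ?g0.
  - by move=> x Ex a b ab/=; rewrite lee_wpmul2r ?lee_fin ?g0//; exact/lefP/nd_nnsfun_approx.
suff suf n : \int[mu]_(x in E) ((EFin \o h n) x * g x) =
    \int[nu]_(x in E) (EFin \o h n) x.
  by under eq_fun do rewrite suf.
transitivity (\int[nu]_(x in E)
   (\sum_(y \in range (h n)) (y * \1_(h n @^-1` [set y]) x)%:E)); last first.
  by apply: eq_integral => t tE; rewrite /= fimfunE -fsumEFin.
have indich m r : measurable_fun E (fun x => (r * \1_(h m @^-1` [set r]) x)%:E).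
  by apply: (measurable_comp measurableT) => //; exact: measurable_funM.
rewrite ge0_integral_fsum//; last by move=> m y Ey; exact: nnfun_muleindic_ge0.
transitivity (\int[mu]_(x in E) (\sum_(y \in range (h n))
    (y * \1_(h n @^-1` [set y]) x)%:E * g x)).
  under [RHS]eq_integral => x xE.
    rewrite -ge0_mule_fsuml => [|y]; last exact: nnfun_muleindic_ge0.
    rewrite fsumEFin // -(fimfunE _ x); over.
  by [].
rewrite ge0_integral_fsum//; last 2 first.
  - move=> y; apply: emeasurable_funM => //; apply: measurable_funTS.
    exact: mg.
  - by move=> m y Ey; rewrite mule_ge0 ?g0// nnfun_muleindic_ge0.
apply: eq_fsbigr => r rhn.
under [RHS]eq_integral do rewrite EFinM.
rewrite integralZl_indic_nnsfun => //.
under eq_integral do rewrite EFinM -muleA.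
rewrite ge0_integralZl//.
- under eq_integral do rewrite muleC.
  rewrite (eq_integral (g \_ (h n @^-1` [set r]))); last first.
    by move=> x xE; rewrite epatch_indic.
  have mP : measurable (h n @^-1` [set r]) by exact: measurable_funPTI.
  rewrite -integral_mkcondr integral_indic// [in RHS]setIC nuE//.
- apply: emeasurable_funM; first exact/measurable_EFinP.
  exact/measurable_funTS/mg.
- by move=> t Et; rewrite mule_ge0 ?lee_fin ?g0.
- by move: rhn; rewrite inE => -[t _ <-]; rewrite lee_fin.
Qed.
End density.
Section normal_moment.
Context {R : realType}.

Lemma gauss_sq_le (a x : R) : 0 < a ->
  x ^+ 2 * expR (- x ^+ 2 / a) <= (a *+ 2) * expR (- x ^+ 2 / (a *+ 2)).
Proof.
move=> a0.
have a20 : 0 < a *+ 2 by rewrite pmulrn_lgt0.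
set y := x ^+ 2 / (a *+ 2).
have y0 : 0 <= y by rewrite divr_ge0 ?sqr_ge0 ?ltW.
have -> : - x ^+ 2 / (a *+ 2) = - y by rewrite /y mulNr.
have -> : - x ^+ 2 / a = - y + - y.
  rewrite /y -mulr_natr; field; by rewrite gt_eqF.
have -> : x ^+ 2 = (a *+ 2) * y by rewrite /y mulrC divfK ?gt_eqF.
rewrite expRD -mulrA ler_pM2l //.
have h : y * expR (- y) <= 1.
  rewrite expRN ler_pdivrMr ?expR_gt0 // mul1r.
  by apply: le_trans (expR_ge1Dx y); rewrite lerDr.
rewrite mulrA; apply: (le_trans (ler_wpM2r (expR_ge0 _) h)); by rewrite mul1r.
Qed.

Lemma normal_sq_lty (s : R) : s != 0 ->
  (\int[normal_prob 0 s]_x ((x ^+ 2)%:E) < +oo)%E.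
Proof.
move=> s0.
have s2 : 0 < s ^+ 2 by rewrite exprn_even_gt0.
set a := s ^+ 2 *+ 2.
have a0 : 0 < a by rewrite pmulrn_lgt0.
set s' := s * Num.sqrt 2.
have s'0 : s' != 0 by rewrite mulf_neq0 // sqrtr_eq0 -ltNge ltr0n.
have e2 : s' ^+ 2 *+ 2 = a *+ 2.
  by rewrite /s' /a exprMn sqr_sqrtr ?ler0n // mulr_natr.
set C := normal_peak s * (a *+ 2) / normal_peak s'.
have C0 : 0 <= C.
  by rewrite /C divr_ge0 ?mulr_ge0 ?normal_peak_ge0 // ltW // pmulrn_lgt0.
rewrite -(@density_integral _ _ _ lebesgue_measure (normal_prob 0 s)
   (fun x => (normal_pdf 0 s x)%:E)) //; last 4 first.
- by move=> x; rewrite lee_fin normal_pdf_ge0.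
- by apply/measurable_EFinP; exact: measurable_normal_pdf.
- by move=> x; rewrite lee_fin sqr_ge0.
- by apply/measurable_EFinP; exact: measurable_funX.
apply: (@le_lt_trans _ _ (\int[lebesgue_measure]_x (C%:E * (normal_pdf 0 s' x)%:E))%E).
  apply: ge0_le_integral => //.
  - by move=> x _; rewrite -EFinM lee_fin mulr_ge0 ?sqr_ge0 ?normal_pdf_ge0.
  - apply/measurable_EFinP; apply: measurable_funM.
      exact: measurable_funX.
    exact: measurable_normal_pdf.
  - apply/measurable_EFinP; apply: measurable_funM.
      exact: measurable_cst.
    exact: measurable_normal_pdf.
  move=> x _; rewrite -EFinM lee_fin.
  rewrite (normal_pdfE _ s0) (normal_pdfE _ s'0) /normal_fun subr0 e2.
  rewrite /C mulrCA -!mulrA ler_wpM2l ?normal_peak_ge0 //.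
  rewrite mulKf; last by rewrite gt_eqF // normal_peak_gt0.
  rewrite mulrA -expr2; exact: gauss_sq_le.
rewrite (@ge0_integralZl _ _ _ lebesgue_measure setT measurableT
  (fun x => (normal_pdf 0 s' x)%:E)); last 3 first.
- by apply/measurable_EFinP; exact: measurable_normal_pdf.
- by move=> x _; rewrite lee_fin normal_pdf_ge0.
- by rewrite lee_fin.
by rewrite integral_normal_pdf mule1 ltry.
Qed.
End normal_moment.
Set Implicit Arguments.
Unset Strict Implicit.
Unset Printing Implicit Defensive.
Definition mkmf d d' (T : measurableType d) (U : measurableType d') (f : T -> U)
  (mf : measurable_fun setT f) : {mfun T >-> U} :=
  HB.pack f (isMeasurableFun.Build _ _ _ _ f mf).
Arguments mkmf {d d' T U f}.

Section general.
Context {R : realType}.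
Local Open Scope ereal_scope.

Lemma marg_ge0 d (Y : measurableType d) (pi : probability Y R) (phi : Y -> R)
  (mphi : measurable_fun setT phi) (mu : {measure set R -> \bar R}) :
  (forall A, measurable A -> pi (phi @^-1` A) = mu A) ->
  forall f : R -> \bar R, measurable_fun setT f -> (forall x, 0 <= f x) ->
  \int[pi]_y f (phi y) = \int[mu]_x f x.
Proof.
move=> hm f mf f0.
have E : \int[mu]_x f x = \int[distribution pi (mkmf mphi)]_x f x.
  by apply: eq_measure_integral => A mA _; rewrite -hm.
rewrite E; symmetry.
have := ge0_integral_pushforward mphi pi measurableT mf (fun x _ => f0 x).
rewrite preimage_setT; exact.
Qed.

Lemma marg_int d (Y : measurableType d) (pi : probability Y R) (phi : Y -> R)
  (mphi : measurable_fun setT phi) (mu : {measure set R -> \bar R}) :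
  (forall A, measurable A -> pi (phi @^-1` A) = mu A) ->
  forall f : R -> R, measurable_fun setT f ->
  mu.-integrable setT (fun x => (f x)%:E) ->
  pi.-integrable setT (fun y => (f (phi y))%:E) /\
  \int[pi]_y (f (phi y))%:E = \int[mu]_x (f x)%:E.
Proof.
move=> hm f mf intf.
have intpi : pi.-integrable setT (fun y => (f (phi y))%:E).
  apply/integrableP; split.
    by apply/measurable_EFinP; exact: measurableT_comp.
  have mab : measurable_fun setT (fun x => `|(f x)%:E|).
    by apply/measurableT_comp => //; exact/measurable_EFinP.
  rewrite (marg_ge0 mphi hm mab) //.
  by move/integrableP : intf => [].
split => //.
have E : \int[mu]_x (f x)%:E = \int[distribution pi (mkmf mphi)]_x (f x)%:E.
  by apply: eq_measure_integral => A mA _; rewrite -hm.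
rewrite E; symmetry.
have mf' : measurable_fun setT (fun x => (f x)%:E) by exact/measurable_EFinP.
have := integral_pushforward mphi (mu:=pi) mf'.
move=> /(_ setT); rewrite preimage_setT; apply => //.
Qed.

End general.
Section general2.
Context {R : realType}.
Local Open Scope ereal_scope.

Lemma int_cst_prob d (T : measurableType d) (P : probability T R) (c : \bar R) :
  \int[P]_x (cst c x) = c.
Proof.
rewrite integral_cst //.
apply: (@eq_trans _ _ (c * 1)); last exact: mule1.
congr (_ * _); exact: probability_setT.
Qed.

Lemma sq_integrable d (T : measurableType d) (P : probability T R) (h : T -> R) :
  measurable_fun setT h -> \int[P]_x ((h x ^+ 2)%:E) < +oo ->
  P.-integrable setT (fun x => (h x)%:E).
Proof.
move=> mh h2; apply/integrableP; split; first exact/measurable_EFinP.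
apply: (@le_lt_trans _ _ (\int[P]_x ((1 + h x ^+ 2)%:E))).
  apply: ge0_le_integral => //.
  - apply: measurableT_comp => //; exact/measurable_EFinP.
  - apply/measurable_EFinP; apply: measurable_funD => //; exact: measurable_funX.
  - move=> x _; rewrite abse_EFin lee_fin.
    have := normr_ge0 (h x); rewrite -(real_normK (num_real (h x))); set a := `|h x|%R => a0.
    nra.
under eq_integral do rewrite EFinD.
rewrite (@ge0_integralD _ _ _ P setT measurableT (fun=> 1%:E)
  (fun x => (h x ^+ 2)%:E)); last 4 first.
- by move=> x _; rewrite lee_fin.
- exact: measurable_cst.
- by move=> x _; rewrite lee_fin sqr_ge0.
- exact/measurable_EFinP/measurable_funX.
apply: lte_add_pinfty => //.
by rewrite (int_cst_prob P 1) ltry.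
Qed.

Lemma jensen_sq d (T : measurableType d) (P : probability T R) (h : T -> R) (t : R) :
  measurable_fun setT h -> P.-integrable setT (fun x => (h x)%:E) ->
  \int[P]_x (h x)%:E = t%:E ->
  (t ^+ 2)%:E <= \int[P]_x ((h x ^+ 2)%:E).
Proof.
move=> mh ih ht.
have [->|hfin] := eqVneq (\int[P]_x ((h x ^+ 2)%:E)) +oo; first by rewrite leey.
have ih2 : P.-integrable setT (fun x => ((h x ^+ 2)%:E)).
  apply/integrableP; split; first exact/measurable_EFinP/measurable_funX.
  rewrite (eq_integral (fun x => (h x ^+ 2)%:E)); first by rewrite ltey.
  by move=> x _; rewrite abse_EFin ger0_norm // sqr_ge0.
have icst : P.-integrable setT (fun x => (t ^+ 2)%:E).
  exact: (finite_measure_integrable_cst P (t ^+ 2) measurableT).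
have ilin : P.-integrable setT (fun x => ((2 * t)%:E * (h x)%:E - (t ^+ 2)%:E)).
  apply: integrableB => //; exact: integrableZl.
have le := le_integral measurableT ilin ih2.
apply: le_trans (le _); last first.
  move=> x _; rewrite -EFinM -EFinB lee_fin.
  have := sqr_ge0 (h x - t); nra.
rewrite integralB //; last exact: integrableZl.
rewrite integralZl // ht.
rewrite (_ : (fun x => (t ^+ 2)%:E) = cst (t ^+ 2)%:E) //.
rewrite (int_cst_prob P).
rewrite -EFinM -EFinB lee_fin; nra.
Qed.

End general2.
Section lower.
Context {R : realType}.
Local Open Scope ereal_scope.

Lemma W2_lb d (Om : measurableType d) (P : probability Om R) (F : Om -> R)
  (mF : measurable_fun setT F) (a : R) :
  P.-integrable setT (fun x => (F x)%:E) -> \int[P]_x (F x)%:E = a%:E ->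
  forall nu : probability R R, P2 nu ->
  (((a - fine (\int[nu]_x x%:E)) ^+ 2)%:E <= W2sq (pushforward P F) nu).
Proof.
move=> iF hF nu hnu.
set b := fine (\int[nu]_x x%:E).
have inu : nu.-integrable setT (fun x => x%:E).
  exact: (@sq_integrable _ _ _ nu (fun x => x) (@measurable_id _ _ setT) hnu).
have hb : \int[nu]_x x%:E = b%:E by rewrite fineK // integrable_fin_num.
have mid : measurable_fun setT (fun x : R => x) by exact: (@measurable_id _ _ setT).
have idist : (distribution P (mkmf mF)).-integrable setT (fun x => x%:E).
  have := @integrable_pushforward _ _ _ _ R F mF P setT (fun x => x%:E).
  rewrite preimage_setT; apply => //; exact/measurable_EFinP.
have ha : \int[distribution P (mkmf mF)]_x x%:E = a%:E.
  have [_ <-] := @marg_int R _ _ P F mF (distribution P (mkmf mF))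
     (fun A mA => erefl) id mid idist.
  exact: hF.
apply: le_ereal_inf_tmp => c [pi cpl ->].
have hm1 : forall A, measurable A -> pi (fst @^-1` A) = distribution P (mkmf mF) A.
  by move=> A mA; rewrite (cpl A mA).1.
have hm2 : forall A, measurable A -> pi (snd @^-1` A) = nu A.
  by move=> A mA; rewrite (cpl A mA).2.
have [i1 e1] := @marg_int R _ _ pi fst measurable_fst _ hm1 id mid idist.
have [i2 e2] := @marg_int R _ _ pi snd measurable_snd _ hm2 id mid inu.
have mh : measurable_fun setT (fun z : R * R => z.1 - z.2)%R.
  exact: measurable_funB measurable_fst measurable_snd.
have ih : pi.-integrable setT (fun z : R * R => (z.1 - z.2)%:E).
  under eq_fun do rewrite EFinB.
  exact: integrableB.
apply: (@jensen_sq R _ _ pi (fun z : R * R => z.1 - z.2)%R (a - b) mh ih).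
under eq_integral do rewrite EFinB.
rewrite integralB // e1 e2 ha hb; by [].
Qed.
End lower.
Section realpart.
Context {R : realType}.

Lemma weights_ge0 K (n : 'I_K -> nat) s : 0 <= weights R n s.
Proof. by rewrite /weights divr_ge0 ?ler0n. Qed.

Lemma weights_mean K (n : 'I_K -> nat) (b : 'I_K -> R) :
  (forall s, (0 < n s)%N) ->
  wmean (weights R n) b * (1 - \sum_(s < K) weights R n s) = 0.
Proof.
move=> npos; case: K n b npos => [|K] n b npos.
  by rewrite /wmean big_ord0 mul0r.
have N0 : (\sum_(t < K.+1) n t)%:R != 0 :> R.
  rewrite pnatr_eq0 -lt0n; apply: (leq_trans (npos ord0)).
  by rewrite (bigD1 ord0) //= leq_addr.
have -> : \sum_(s < K.+1) weights R n s = 1.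
  by rewrite /weights -mulr_suml -natr_sum mulfV.
by rewrite subrr mulr0.
Qed.

Lemma var_ineq K (w c : 'I_K -> R) (m e : R) :
  (forall s, 0 <= w s) -> \sum_(s < K) w s * (c s - m) = 0 ->
  \sum_(s < K) w s * (c s - m) ^+ 2 <= \sum_(s < K) w s * (c s - m + e) ^+ 2.
Proof.
move=> w0 h0; rewrite -subr_ge0 -sumrB.
have -> : \sum_(s < K) (w s * (c s - m + e) ^+ 2 - w s * (c s - m) ^+ 2) =
   \sum_(s < K) ((2 * e) * (w s * (c s - m)) + e ^+ 2 * w s).
  by apply: eq_bigr => s _; ring.
rewrite big_split /= -mulr_sumr h0 mulr0 add0r -mulr_sumr.
by rewrite mulr_ge0 ?sqr_ge0 // sumr_ge0.
Qed.
End realpart.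
Unset Implicit Arguments.
Set Strict Implicit.
Theorem lemma3 (R : realType) (K p : nat) (Sigma : 'M[R]_p)
  (d : measure_display) (Omega : measurableType d) (P : probability Omega R)
  (X : Omega -> 'rV[R]_p)
  (n : 'I_K -> nat) (Xs : forall s : 'I_K, 'M[R]_(n s, p))
  (Ys : forall s : 'I_K, 'cV[R]_(n s))
  (betahat : 'rV[R]_p) (bhat : 'I_K -> R) (tau : R) :
  posdef Sigma ->
  is_gaussian_vector P Sigma X ->
  (forall s, (0 < n s)%N) ->
  is_erm Xs Ys betahat bhat ->
  0 <= tau <= 1 ->
  let w := weights R n in
  let mu := fun s => law P (fun om => fhat w betahat bhat tau (X om) s) in
  unfairness w mu =
    (tau * \sum_(s < K) w s * (bhat s - wmean w bhat) ^+ 2)%:E /\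
  exists2 nu, P2 nu & unf_obj w mu nu = unfairness w mu.
Proof.
move=> [_ Spd] hX npos _ /andP[tau0 tau1] w mu.
set m := wmean w bhat.
pose G := fun om => inner (X om) betahat.
have mG : measurable_fun setT G := (hX betahat).1.
have G2 : (\int[P]_om ((G om ^+ 2)%:E) < +oo)%E.
  have [b0|bn0] := eqVneq betahat 0.
    rewrite (eq_integral (fun=> 0%E)) ?integral0 //.
    move=> om _; rewrite /G /inner b0 big1 ?expr0n //.
    by move=> i _; rewrite mxE mulr0.
  have hlaw := (hX betahat).2 bn0.
  pose G' : Omega -> measurableTypeR R := G.
  have mG' : measurable_fun setT G' := mG.
  have hlaw' : pushforward P G' = normal_prob 0 (Num.sqrt (quadf Sigma betahat)) := hlaw.
  have mx2 : measurable_fun setT (fun x : measurableTypeR R => (x ^+ 2)%:E).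
    exact/measurable_EFinP/measurable_funX.
  have f0 : {in [set: measurableTypeR R], forall x : R, (0 <= (x ^+ 2)%:E)%E}.
    by move=> x _; rewrite lee_fin sqr_ge0.
  have := ge0_integral_pushforward mG' P measurableT mx2 f0.
  rewrite preimage_setT hlaw' => E.
  have -> : (\int[P]_om ((G om ^+ 2)%:E) = \int[P]_om (((fun x : measurableTypeR R => (x ^+ 2)%:E) \o G') om))%E by [].
  rewrite -E.
  have sn0 : Num.sqrt (quadf Sigma betahat) != 0.
    by rewrite gt_eqF // sqrtr_gt0 Spd.
  exact (@normal_sq_lty _ _ sn0).
have iG : P.-integrable setT (fun om => (G om)%:E) := sq_integrable mG G2.
set g := fine (\int[P]_om (G om)%:E).
have hg : (\int[P]_om (G om)%:E = g%:E)%E by rewrite fineK // integrable_fin_num.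
pose c := fun s => Num.sqrt tau * bhat s + (1 - Num.sqrt tau) * m.
have mGk : forall k, measurable_fun setT (fun om => G om + k).
  by move=> k; apply: measurable_funD => //; exact: measurable_cst.
have intGk : forall k, P.-integrable setT (fun om => (G om + k)%:E) /\
    (\int[P]_om (G om + k)%:E = (g + k)%:E)%E.
  move=> k.
  have ik : P.-integrable setT (fun om => k%:E).
    exact: (finite_measure_integrable_cst P k measurableT).
  split; first by under eq_fun do rewrite EFinD; exact: integrableD.
  under eq_integral do rewrite EFinD.
  rewrite integralD // hg.
  by rewrite (int_cst_prob P k%:E).
have muE : forall s, mu s = pushforward P (fun om => G om + c s).
  by move=> s; rewrite /mu /law /c /G /fhat -/m; congr pushforward; apply/funext => om; rewrite addrA.
pose nu0 := distribution P (mkmf (mGk m)).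
have nu0P2 : P2 nu0.
  rewrite /P2 /=.
  have mx2 : measurable_fun setT (fun x : R => (x ^+ 2)%:E).
    exact/measurable_EFinP/measurable_funX.
  rewrite -(@marg_ge0 R _ _ P _ (mGk m) nu0 (fun A mA => erefl) _ mx2); last first.
    by move=> x; rewrite lee_fin sqr_ge0.
  apply: (@le_lt_trans _ _ (\int[P]_om ((G om ^+ 2)%:E + ((G om ^+ 2)%:E + (m ^+ 2 + m ^+ 2)%:E)))%E).
    apply: ge0_le_integral => //.
    - by move=> x _; rewrite lee_fin sqr_ge0.
    - exact/measurable_EFinP/measurable_funX.
    - apply: emeasurable_funD; first exact/measurable_EFinP/measurable_funX.
      apply: emeasurable_funD; first exact/measurable_EFinP/measurable_funX.
      exact: measurable_cst.
    - move=> x _; rewrite -!EFinD lee_fin.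
      have := sqr_ge0 (G x - m); nra.
  have mG2 : measurable_fun setT (fun om => (G om ^+ 2)%:E).
    exact/measurable_EFinP/measurable_funX.
  have g20 : forall om, [set: Omega] om -> (0 <= (G om ^+ 2)%:E)%E.
    by move=> om _; rewrite lee_fin sqr_ge0.
  have m20 : forall om : Omega, [set: Omega] om -> (0 <= ((m ^+ 2 + m ^+ 2)%:E))%E.
    by move=> om _; rewrite lee_fin addr_ge0 ?sqr_ge0.
  have s0 : forall om, [set: Omega] om ->
      (0 <= (G om ^+ 2)%:E + (m ^+ 2 + m ^+ 2)%:E)%E.
    by move=> om _; rewrite -EFinD lee_fin !addr_ge0 ?sqr_ge0.
  have ms : measurable_fun setT (fun om => (G om ^+ 2)%:E + (m ^+ 2 + m ^+ 2)%:E)%E.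
    apply: emeasurable_funD => //; exact: measurable_cst.
  rewrite (ge0_integralD P measurableT g20 mG2 s0 ms).
  rewrite (ge0_integralD P measurableT g20 mG2 m20 (measurable_cst _)).
  rewrite (int_cst_prob P).
  by apply: lte_add_pinfty => //; apply: lte_add_pinfty => //; rewrite ltry.
have inu0 : nu0.-integrable setT (fun x => x%:E).
  exact: (@sq_integrable _ _ _ nu0 (fun x => x) (@measurable_id _ _ setT) nu0P2).
have mean0 : fine (\int[nu0]_x x%:E)%E = g + m.
  have [_ e] := @marg_int R _ _ P _ (mGk m) nu0 (fun A mA => erefl) (fun x => x)
     (@measurable_id _ _ setT) inu0.
  by rewrite -e (intGk m).2.
have W2eq : forall s, W2sq (mu s) nu0 = ((c s - m) ^+ 2)%:E.
  move=> s; apply/eqP; rewrite eq_le; apply/andP; split.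
    have mpair := measurable_fun_pair (mGk (c s)) (mGk m).
    apply: ereal_inf_lbound.
    exists (distribution P (mkmf mpair)).
      by move=> A mA; rewrite muE; split.
    have mf : measurable_fun setT (fun z : R * R => ((z.1 - z.2) ^+ 2)%:E).
      apply/measurable_EFinP/measurable_funX.
      exact: measurable_funB measurable_fst measurable_snd.
    have f0 : {in [set: (R * R)%type], forall z : R * R, (0 <= ((z.1 - z.2) ^+ 2)%:E)%E}.
      by move=> z _; rewrite lee_fin sqr_ge0.
    have := ge0_integral_pushforward mpair P measurableT mf f0.
    rewrite preimage_setT => E.
    symmetry; rewrite [LHS]E.
    rewrite (eq_integral (fun=> ((c s - m) ^+ 2)%:E)); first exact: (int_cst_prob P).
    by move=> om _ /=; rewrite opprD addrACA subrr add0r.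
  rewrite muE.
  have := W2_lb (mGk (c s)) (intGk (c s)).1 (intGk (c s)).2 nu0P2.
  by rewrite mean0 opprD addrACA subrr add0r.
have cm : forall s, c s - m = Num.sqrt tau * (bhat s - m).
  by move=> s; rewrite /c; ring.
have Vc : tau * \sum_(s < K) w s * (bhat s - m) ^+ 2 =
    \sum_(s < K) w s * (c s - m) ^+ 2.
  rewrite mulr_sumr; apply: eq_bigr => s _.
  by rewrite cm exprMn sqr_sqrtr //; ring.
have objV : unf_obj w mu nu0 = (tau * \sum_(s < K) w s * (bhat s - m) ^+ 2)%:E.
  rewrite /unf_obj Vc -sumEFin; apply: eq_bigr => s _.
  by rewrite W2eq -EFinM.
have sum0 : \sum_(s < K) w s * (c s - m) = 0.
  rewrite (eq_bigr (fun s => Num.sqrt tau * (w s * bhat s - m * w s))); last first.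
    by move=> s _; rewrite cm; ring.
  rewrite -mulr_sumr sumrB -mulr_sumr.
  have := weights_mean bhat npos; rewrite -/w -/m => h.
  by rewrite -/(wmean w bhat) -/m -{1}(mulr1 m) -mulrBr h mulr0.
have lower : forall nu, P2 nu ->
    ((tau * \sum_(s < K) w s * (bhat s - m) ^+ 2)%:E <= unf_obj w mu nu)%E.
  move=> nu hnu; set t := fine (\int[nu]_x x%:E)%E.
  apply: (@le_trans _ _ (\sum_(s < K) (w s)%:E * (((g + c s - t) ^+ 2)%:E))%E).
    rewrite (eq_bigr (fun s => (w s * (g + c s - t) ^+ 2)%:E)); last first.
      by move=> s _; rewrite EFinM.
    rewrite sumEFin lee_fin Vc.
    have := @var_ineq R K w c m (g + m - t) (@weights_ge0 R K n) sum0.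
    move/le_trans; apply; rewrite le_eqVlt; apply/orP; left; apply/eqP.
    by apply: eq_bigr => s _; congr (_ * _ ^+ 2); ring.
  apply: lee_sum => s _; apply: lee_wpmul2l; first by rewrite lee_fin weights_ge0.
  rewrite muE; exact: (W2_lb (mGk (c s)) (intGk (c s)).1 (intGk (c s)).2 hnu).
have inf : unfairness w mu = (tau * \sum_(s < K) w s * (bhat s - m) ^+ 2)%:E.
  apply/eqP; rewrite eq_le; apply/andP; split.
    by apply: ereal_inf_lbound; exists nu0 => //; rewrite objV.
  by apply: le_ereal_inf_tmp => x [nu hnu ->]; exact: lower.
split; first exact: inf.
by exists nu0 => //; rewrite inf objV.
Qed.
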